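(* If $K_1$ and $K_2$ are long virtual knots obtained from one another by a finite sequence of extended Reidemeister moves and band-pass moves, then $$v_{2,1}(K_1)+v_{2,2}(K_1)\equiv v_{2,1}(K_2)+v_{2,2}(K_2)\pmod 2.$$
   Context: Long virtual knots are immersions $\mathbb{R}\to\mathbb{R}^2$ agreeing with the $x$-axis outside a compact set, with double points marked classical or virtual, oriented from $-\infty$ to $\infty$, considered up to the extended Reidemeister moves (classical Reidemeister moves and the detour move). A band-pass move is the local move in which, inside a disk, one band (a pair of parallel strands of opposite orientation) crosses another such band at four classical crossings with the first band passing entirely over the second, and this is replaced by the configuration where the first band passes entirely under the second (both orientation versions of this move are allowed). Gauss diagram $D_K$ of a long virtual knot: the real line with one arrow for each classical crossing joining its two preimages, pointing from the overcrossing preimage to the undercrossing preimage, labeled with the local writhe sign $\pm1$. The Goussarov–Polyak–Viro degree-two invariants $v_{2,1},v_{2,2}$ are defined as follows: for each unordered pair of arrows $\{a,b\}$ of $D_K$ whose four endpoints $p_1<p_2<p_3<p_4$ on $\mathbb{R}$ satisfy that $a$ joins $p_1,p_3$ and $b$ joins $p_2,p_4$, the pair contributes $\mathrm{sign}(a)\,\mathrm{sign}(b)$ to $v_{2,1}(K)$ if $a$ points $p_1\to p_3$ and $b$ points $p_4\to p_2$, and contributes $\mathrm{sign}(a)\,\mathrm{sign}(b)$ to $v_{2,2}(K)$ if $a$ points $p_3\to p_1$ and $b$ points $p_2\to p_4$; other pairs contribute nothing. (Only the sum $v_{2,1}+v_{2,2}$ enters the statement.) *)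

(* Defs.v *)
(* Long virtual knots are represented by their Gauss diagrams
   (Goussarov-Polyak-Viro): a long Gauss diagram is a word on the real line
   listing the preimages of the classical crossings in order from -oo to +oo.
   Virtual crossings and the detour move are invisible on Gauss diagrams; the
   classical Reidemeister moves and the band-pass move become the local word
   moves defined below (each one is exactly the Gauss-diagram image of the
   corresponding diagrammatic move). *)
From mathcomp Require Import all_boot all_algebra.
Set Implicit Arguments. Unset Strict Implicit. Unset Printing Implicit Defensive.
Import GRing.Theory Num.Theory.
Local Open Scope ring_scope.

(* An endpoint of an arrow: (label of the arrow, is_tail, sign).
   is_tail = true : the overcrossing preimage (the arrow points away from it);
   sign = true : local writhe +1, sign = false : local writhe -1. *)
Definition letter := (nat * bool * bool)%type.
Definition lab (x : letter) : nat := x.1.1.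
Definition is_tail (x : letter) : bool := x.1.2.
Definition sgnb (x : letter) : bool := x.2.

Definition gword := seq letter.

Definition pm (b : bool) : int := if b then 1 else -1.

Definition gauss_wf (W : gword) : Prop :=
  forall a : nat,
    count (fun x => lab x == a) W = 0%N \/
    exists s : bool,
      [/\ count (pred1 (a, true, s)) W = 1%N,
          count (pred1 (a, false, s)) W = 1%N &
          count (fun x => lab x == a) W = 2%N].

Definition pair2 (p : bool) (x y : letter) : gword :=
  if p then [:: x; y] else [:: y; x].

Definition R1_move (W1 W2 : gword) : Prop :=
  exists (u v : gword) (a : nat) (t s : bool),
    W1 = u ++ [:: (a, t, s); (a, ~~ t, s)] ++ v /\ W2 = u ++ v.

Definition R2_move (W1 W2 : gword) : Prop :=
  exists (u v w : gword) (a b : nat) (tau s p q : bool),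
    a != b /\
    W1 = u ++ pair2 p (a, tau, s) (b, tau, ~~ s) ++ v
           ++ pair2 q (a, ~~ tau, s) (b, ~~ tau, ~~ s) ++ w /\
    W2 = u ++ v ++ w.

(* Reidemeister III: three arrows x : T -> M, y : T -> B, z : M -> B (top,
   middle, bottom strand) with endpoints in three segments of two adjacent
   letters (one segment per strand, appearing in any order along the line).  The local
   configuration is realizable by an actual triangle iff
     oT*oM*eps(x) = oT*oB*eps(y) = oM*oB*eps(z)
   where oT = +1 iff on T the crossing x comes before y, oM = +1 iff on M the
   crossing x comes before z, oB = +1 iff on B the crossing y comes before z. *)
Definition R3_move (W1 W2 : gword) : Prop :=
  exists (x y z : nat) (sx sy sz oT oM oB : bool)
         (X1 X2 X3 : gword) (u0 u1 u2 u3 : gword),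
    uniq [:: x; y; z] /\
    pm oT * pm oM * pm sx = pm oT * pm oB * pm sy /\
    pm oT * pm oB * pm sy = pm oM * pm oB * pm sz /\
    perm_eq [:: X1; X2; X3]
      [:: pair2 oT (x, true, sx) (y, true, sy);
          pair2 oM (x, false, sx) (z, true, sz);
          pair2 oB (y, false, sy) (z, false, sz)] /\
    W1 = u0 ++ X1 ++ u1 ++ X2 ++ u2 ++ X3 ++ u3 /\
    W2 = u0 ++ rev X1 ++ u1 ++ rev X2 ++ u2 ++ rev X3 ++ u3.

(* reversing an arrow and negating its sign (over/under swapped) *)
Definition flip (l : letter) : letter := (lab l, ~~ is_tail l, ~~ sgnb l).

(* Band-pass move: band A = strands A1, A2 (antiparallel), band B = strands
   B1, B2 (antiparallel); arrow x_ij points from A_i to B_j (A over B).  Antiparallelism: A1 meets B1 first iff A2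
   meets B2 first (p), B1 meets A1 first iff B2 meets A2 first (q).  The
   realizable signs are eps(x11) = eps(x22) = -eps(x12) = -eps(x21) (both
   values of s occur, covering both orientation versions of the move).  The
   move keeps the planar picture and passes A under B: every one of the four
   arrows is reversed and its sign negated. *)
Definition bandpass_move (W1 W2 : gword) : Prop :=
  exists (x11 x12 x21 x22 : nat) (s p q : bool)
         (X1 X2 X3 X4 : gword) (u0 u1 u2 u3 u4 : gword),
    uniq [:: x11; x12; x21; x22] /\
    perm_eq [:: X1; X2; X3; X4]
      [:: pair2 p (x11, true, s) (x12, true, ~~ s);
          pair2 (~~ p) (x21, true, ~~ s) (x22, true, s);
          pair2 q (x11, false, s) (x21, false, ~~ s);
          pair2 (~~ q) (x12, false, ~~ s) (x22, false, s)] /\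
    W1 = u0 ++ X1 ++ u1 ++ X2 ++ u2 ++ X3 ++ u3 ++ X4 ++ u4 /\
    W2 = u0 ++ map flip X1 ++ u1 ++ map flip X2 ++ u2 ++ map flip X3
            ++ u3 ++ map flip X4 ++ u4.

Definition relabel_move (W1 W2 : gword) : Prop :=
  exists f : nat -> nat, injective f /\
    W2 = map (fun l => (f (lab l), is_tail l, sgnb l)) W1.

Definition elem_move (W1 W2 : gword) : Prop :=
  relabel_move W1 W2 \/ R1_move W1 W2 \/ R2_move W1 W2 \/ R3_move W1 W2
  \/ bandpass_move W1 W2.

Definition move_step (W1 W2 : gword) : Prop :=
  [/\ gauss_wf W1, gauss_wf W2 & (elem_move W1 W2 \/ elem_move W2 W1)].

Inductive bp_equiv : gword -> gword -> Prop :=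
| bp_refl W : bp_equiv W W
| bp_step W1 W2 W3 : move_step W1 W2 -> bp_equiv W2 W3 -> bp_equiv W1 W3.

Definition dlet : letter := (0%N, false, false).

Definition v21 (W : gword) : int :=
  \sum_(i < size W) \sum_(j < size W) \sum_(k < size W) \sum_(l < size W)
    if [&& (i < j)%N, (j < k)%N, (k < l)%N,
           lab (nth dlet W i) == lab (nth dlet W k),
           lab (nth dlet W j) == lab (nth dlet W l),
           is_tail (nth dlet W i) & is_tail (nth dlet W l)]
    then pm (sgnb (nth dlet W i)) * pm (sgnb (nth dlet W j)) else 0.

Definition v22 (W : gword) : int :=
  \sum_(i < size W) \sum_(j < size W) \sum_(k < size W) \sum_(l < size W)
    if [&& (i < j)%N, (j < k)%N, (k < l)%N,
           lab (nth dlet W i) == lab (nth dlet W k),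
           lab (nth dlet W j) == lab (nth dlet W l),
           is_tail (nth dlet W k) & is_tail (nth dlet W j)]
    then pm (sgnb (nth dlet W i)) * pm (sgnb (nth dlet W j)) else 0.

(* Main.v *)
Require Import Defs.
From mathcomp Require Import all_boot all_algebra.
Import GRing.Theory Num.Theory.
Local Open Scope ring_scope.
From mathcomp Require Import zify.

Definition A1 (K : letter -> int) (W : gword) : int :=
  \sum_(0 <= l < size W) K (nth dlet W l).
Definition A2 (H : letter -> letter -> int) (W : gword) : int :=
  \sum_(0 <= k < size W) \sum_(0 <= l < size W)
    if (k < l)%N then H (nth dlet W k) (nth dlet W l) else 0.
Definition A3 (G : letter -> letter -> letter -> int) (W : gword) : int :=
  \sum_(0 <= j < size W) \sum_(0 <= k < size W) \sum_(0 <= l < size W)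
    if [&& (j < k)%N & (k < l)%N] then G (nth dlet W j) (nth dlet W k) (nth dlet W l) else 0.
Definition A4 (F : letter -> letter -> letter -> letter -> int) (W : gword) : int :=
  \sum_(0 <= i < size W) \sum_(0 <= j < size W) \sum_(0 <= k < size W) \sum_(0 <= l < size W)
    if [&& (i < j)%N, (j < k)%N & (k < l)%N]
    then F (nth dlet W i) (nth dlet W j) (nth dlet W k) (nth dlet W l) else 0.

Lemma A1_cons K x W : A1 K (x :: W) = K x + A1 K W.
Proof. by rewrite /A1 /= big_nat_recl. Qed.

Lemma A2_cons H x W : A2 H (x :: W) = A1 (H x) W + A2 H W.
Proof.
rewrite /A2 /= big_nat_recl //; congr (_ + _).
  by rewrite big_nat_recl // ?ltn0 ?andbF ?andFb add0r.
by apply: eq_bigr => k _; rewrite big_nat_recl // ?ltn0 ?andbF ?andFb add0r.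
Qed.

Lemma A3_cons G x W : A3 G (x :: W) = A2 (G x) W + A3 G W.
Proof.
rewrite /A3 /= big_nat_recl //; congr (_ + _).
  rewrite big_nat_recl // big1 ?add0r //.
  by apply: eq_bigr => k _; rewrite big_nat_recl // ?ltn0 ?andbF ?andFb add0r.
apply: eq_bigr => j _; rewrite big_nat_recl // big1 ?add0r; last by move=> l _; rewrite ?ltn0 ?andbF.
by apply: eq_bigr => k _; rewrite big_nat_recl // ?ltn0 ?andbF ?andFb add0r.
Qed.

Lemma A4_cons F x W : A4 F (x :: W) = A3 (F x) W + A4 F W.
Proof.
rewrite /A4 /= big_nat_recl //; congr (_ + _).
  rewrite big_nat_recl // big1 ?add0r; last by move=> k _; rewrite big1 // => l _.
  apply: eq_bigr => j _; rewrite big_nat_recl // big1 ?add0r //.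
  by apply: eq_bigr => k _; rewrite big_nat_recl // ?ltn0 ?andbF ?andFb add0r.
apply: eq_bigr => i _; rewrite big_nat_recl // big1 ?add0r; last by move=> k _; rewrite big1 // => l _.
apply: eq_bigr => j _; rewrite big_nat_recl // big1 ?add0r; last by move=> l _; rewrite ?ltn0 ?andbF.
by apply: eq_bigr => k _; rewrite big_nat_recl // ?ltn0 ?andbF ?andFb add0r.
Qed.

Definition F21 (a b c d : letter) : int :=
  if [&& lab a == lab c, lab b == lab d, is_tail a & is_tail d]
  then pm (sgnb a) * pm (sgnb b) else 0.
Definition F22 (a b c d : letter) : int :=
  if [&& lab a == lab c, lab b == lab d, is_tail c & is_tail b]
  then pm (sgnb a) * pm (sgnb b) else 0.

Lemma v21E W : v21 W = A4 F21 W.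
Proof.
rewrite /v21 /A4 /F21 big_mkord; apply: eq_bigr => i _.
rewrite big_mkord; apply: eq_bigr => j _.
rewrite big_mkord; apply: eq_bigr => k _.
rewrite big_mkord; apply: eq_bigr => l _.
by case: (i < j)%N; case: (j < k)%N; case: (k < l)%N.
Qed.
Lemma v22E W : v22 W = A4 F22 W.
Proof.
rewrite /v22 /A4 /F22 big_mkord; apply: eq_bigr => i _.
rewrite big_mkord; apply: eq_bigr => j _.
rewrite big_mkord; apply: eq_bigr => k _.
rewrite big_mkord; apply: eq_bigr => l _.
by case: (i < j)%N; case: (j < k)%N; case: (k < l)%N.
Qed.

Lemma A1_nil K : A1 K [::] = 0. Proof. by rewrite /A1 big_geq. Qed.
Lemma A2_nil K : A2 K [::] = 0. Proof. by rewrite /A2 big_geq. Qed.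
Lemma A3_nil K : A3 K [::] = 0. Proof. by rewrite /A3 big_geq. Qed.
Lemma A4_nil K : A4 K [::] = 0. Proof. by rewrite /A4 big_geq. Qed.

Lemma A1D K K' W : A1 K W + A1 K' W = A1 (fun a => K a + K' a) W.
Proof. elim: W => [|x W IH]; first by rewrite !A1_nil addr0.
by rewrite !A1_cons -IH addrACA. Qed.
Lemma A2D K K' W : A2 K W + A2 K' W = A2 (fun a b => K a b + K' a b) W.
Proof. elim: W => [|x W IH]; first by rewrite !A2_nil addr0.
by rewrite !A2_cons -IH addrACA A1D. Qed.
Lemma A3D K K' W : A3 K W + A3 K' W = A3 (fun a b c => K a b c + K' a b c) W.
Proof. elim: W => [|x W IH]; first by rewrite !A3_nil addr0.
by rewrite !A3_cons -IH addrACA A2D. Qed.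
Lemma A4D K K' W : A4 K W + A4 K' W = A4 (fun a b c d => K a b c d + K' a b c d) W.
Proof. elim: W => [|x W IH]; first by rewrite !A4_nil addr0.
by rewrite !A4_cons -IH addrACA A3D. Qed.

Definition P (z : int) : bool := ~~ (2 %| z)%Z.
Lemma PD a b : P (a + b) = P a (+) P b.
Proof. rewrite /P. case: (boolP (2 %| a)%Z); case: (boolP (2 %| b)%Z) => /= Hb Ha; lia. Qed.
Lemma P0 : P 0 = false. Proof. by []. Qed.

Definition B1 (K : letter -> bool) (W : gword) : bool := odd (count K W).
Fixpoint B2 (H : letter -> letter -> bool) (W : gword) : bool :=
  if W is z :: W' then B1 (H z) W' (+) B2 H W' else false.
Fixpoint B3 (G : letter -> letter -> letter -> bool) (W : gword) : bool :=
  if W is z :: W' then B2 (G z) W' (+) B3 G W' else false.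
Fixpoint B4 (F : letter -> letter -> letter -> letter -> bool) (W : gword) : bool :=
  if W is z :: W' then B3 (F z) W' (+) B4 F W' else false.

Lemma B1_cons K x W : B1 K (x :: W) = K x (+) B1 K W.
Proof. by rewrite /B1 /= oddD oddb. Qed.

Lemma PA1 K W : P (A1 K W) = B1 (fun a => P (K a)) W.
Proof. elim: W => [|x W IH]; first by rewrite A1_nil.
by rewrite A1_cons PD IH B1_cons. Qed.
Lemma PA2 K W : P (A2 K W) = B2 (fun a b => P (K a b)) W.
Proof. elim: W => [|x W IH]; first by rewrite A2_nil.
by rewrite A2_cons PD IH PA1. Qed.
Lemma PA3 K W : P (A3 K W) = B3 (fun a b c => P (K a b c)) W.
Proof. elim: W => [|x W IH]; first by rewrite A3_nil.
by rewrite A3_cons PD IH PA2. Qed.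
Lemma PA4 K W : P (A4 K W) = B4 (fun a b c d => P (K a b c d)) W.
Proof. elim: W => [|x W IH]; first by rewrite A4_nil.
by rewrite A4_cons PD IH PA3. Qed.

Definition G (a b c d : letter) : bool := P (F21 a b c d + F22 a b c d).

Lemma Pv W : P (v21 W + v22 W) = B4 G W.
Proof. by rewrite v21E v22E A4D PA4. Qed.

Lemma GE a b c d : G a b c d =
  [&& lab a == lab c, lab b == lab d, is_tail a & is_tail d] (+)
  [&& lab a == lab c, lab b == lab d, is_tail c & is_tail b].
Proof.
rewrite /G /F21 /F22 PD.
have Hpm : forall x y, P (pm x * pm y) = true by case; case.
by case: [&& _, _, _ & _]; case: [&& _, _, _ & _]; rewrite ?Hpm.
Qed.

Local Close Scope ring_scope.
Fixpoint dz (s : seq nat) (u : gword) : seq (letter * bool) :=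
  if u is y :: r then (y, is_tail y == (lab y \notin s)) :: dz (lab y :: s) r else [::].
Definition bits s u := map snd (dz s u).
Fixpoint cb (S : seq bool) : bool :=
  if S is b :: S' then (b && odd (count negb S')) (+) cb S' else false.
Definition Phi W := cb (bits [::] W).

Lemma dz_cat s u v : dz s (u ++ v) = dz s u ++ dz (rev (map lab u) ++ s) v.
Proof.
elim: u s => [|y u IH] s //=.
by rewrite IH rev_cons cat_rcons.
Qed.

Lemma dz_eqi s1 s2 u : (forall a, a \in map lab u -> (a \in s1) = (a \in s2)) ->
  dz s1 u = dz s2 u.
Proof.
elim: u s1 s2 => [|y u IH] s1 s2 //= H.
rewrite H ?mem_head // (IH (lab y :: s1) (lab y :: s2)) // => a Ha.
by rewrite !in_cons H // in_cons Ha orbT.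
Qed.

Lemma dz_fst s u : map fst (dz s u) = u.
Proof. by elim: u s => [|y u IH] s //=; rewrite IH. Qed.

Lemma cb_cat S T : cb (S ++ T) = cb S (+) cb T (+) (odd (count id S) && odd (count negb T)).
Proof.
elim: S => [|b S IH] //=; first by rewrite addbF.
rewrite IH count_cat oddD oddD /=.
move: (odd (count negb S)) (odd (count negb T)) (odd (count id S)) (cb S) (cb T).
by case: b; do 5! case.
Qed.

Lemma cb_dd A d B : cb (A ++ d :: d :: B) = cb (A ++ B).
Proof.
rewrite !cb_cat /= !oddD.
move: (odd (count negb B)) (odd (count id A)) (cb A) (cb B).
by case: d; do 4! case.
Qed.

Lemma cb_rev2 A a b B : cb (A ++ [:: b; a] ++ B) = cb (A ++ [:: a; b] ++ B) (+) (a (+) b).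
Proof.
rewrite !cb_cat /= !oddD.
move: (odd (count negb B)) (odd (count id A)) (cb A) (cb B).
by case: a; case: b; do 4! case.
Qed.

Lemma cb_neg2 A a b B : cb (A ++ [:: ~~ a; ~~ b] ++ B) = cb (A ++ [:: a; b] ++ B) (+) (a (+) b).
Proof.
rewrite !cb_cat /= !oddD.
move: (odd (count negb B)) (odd (count id A)) (cb A) (cb B).
by case: a; case: b; do 4! case.
Qed.

Lemma cb_ins d B1 B2 : cb (d :: B1 ++ d :: B2) = cb (B1 ++ B2) (+) odd (count (fun b => b (+) d) B1).
Proof.
rewrite /= !cb_cat /= !count_cat /= !oddD.
have -> : odd (count (fun b => b (+) d) B1) = (if d then odd (count negb B1) else odd (count id B1)).
  by case: d; apply: congr1; apply: eq_count => b; case: b.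
move: (odd (count negb B1)) (odd (count negb B2)) (odd (count id B1)) (cb B1) (cb B2).
by case: d; do 5! case.
Qed.

Definition fl (a : nat) (W : gword) := filter (fun y => lab y == a) W.
Definition pairok (a : nat) (F : gword) :=
  F = [::] \/ exists t sg, F = [:: (a, t, sg); (a, ~~ t, sg)].
Definition wf2 (W : gword) := forall a, pairok a (fl a W).

Lemma split_first (T : Type) (p : pred T) (W : seq T) : has p W ->
  exists w1 z w2, [/\ W = w1 ++ z :: w2, p z & ~~ has p w1].
Proof.
elim: W => [|y W IH] //= /orP [Hy|Hh].
  by exists [::], y, W.
case Py: (p y); first by exists [::], y, W.
have [w1 [z [w2 [-> Pz Hw1]]]] := IH Hh.
by exists (y :: w1), z, w2; rewrite /= Py.
Qed.

Lemma fl_nil a W : (fl a W == [::]) = ~~ has (fun y => lab y == a) W.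
Proof. by rewrite /fl has_filter negbK. Qed.

Lemma notin_labs a W : (a \notin map lab W) = (fl a W == [::]).
Proof.
rewrite fl_nil; apply/idP/idP.
  by move=> H; apply/hasPn => y Hy; apply/eqP => E; move/negP: H; apply; rewrite -E map_f.
move=> /hasPn H; apply/negP => /mapP [y Hy E]; by move: (H y Hy); rewrite E eqxx.
Qed.

Lemma wf_wf2 W : gauss_wf W -> wf2 W.
Proof.
move=> Hw a; rewrite /pairok; case: (Hw a) => [H0|[sg [H1 H2 H3]]].
  by left; apply/eqP; rewrite -size_eq0 size_filter H0.
right.
have Hs : size (fl a W) = 2%N by rewrite size_filter.
have C1 : count (pred1 (a, true, sg)) (fl a W) = 1%N.
  rewrite /fl count_filter -H1; apply: eq_count => y /=.
  by case: (y =P _) => [->|]; rewrite ?eqxx ?andbF.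
have C2 : count (pred1 (a, false, sg)) (fl a W) = 1%N.
  rewrite /fl count_filter -H2; apply: eq_count => y /=.
  by case: (y =P _) => [->|]; rewrite ?eqxx ?andbF.
have Ntf : ((a, true, sg) == (a, false, sg)) = false by apply/eqP; case.
have Nft : ((a, false, sg) == (a, true, sg)) = false by apply/eqP; case.
move: Hs C1 C2; case: (fl a W) => [|f1 [|f2 [|f3 F]]] //= _.
case: (f1 =P (a,true,sg)) => [->|N1].
  rewrite Ntf; case: (f2 =P (a,false,sg)) => [->|N2] _ //.
  by exists true, sg.
case: (f2 =P (a,true,sg)) => [->|N2]; last by [].
rewrite Ntf; case: (f1 =P (a,false,sg)) => [->|N3] _ //.
by exists false, sg.
Qed.

Lemma E (L : pred nat) (f : bool -> bool) s u :
  (forall a, L a -> a \notin s) -> (forall a, L a -> pairok a (fl a u)) ->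
  ~~ odd (count (fun q => L (lab q.1) && f q.2) (dz s u)).
Proof.
have [n Hn] : exists n, (size u <= n)%N by exists (size u).
elim: n u s Hn => [|n IH] [|y r] s //= Hn HL Hp.
case Ly: (L (lab y)); last first.
  rewrite add0n; apply: IH => // a La.
    by rewrite in_cons negb_or HL // andbT; apply/eqP => E; rewrite E Ly in La.
  have := Hp a La; rewrite /fl /=.
  case: (lab y =P a) => [E|//]; by rewrite -E Ly in La.
have := Hp _ Ly; rewrite /pairok /fl /= eqxx => -[//|[t [sg [Ey Hr]]]].
have Hh : has (fun x => lab x == lab y) r by rewrite has_filter Hr.
have [r1 [z [r2 [Er Pz Hr1]]]] := @split_first _ _ _ Hh.
move: Hr; rewrite Er filter_cat /=.
have -> : filter (fun x => lab x == lab y) r1 = [::] by apply/eqP; rewrite -/(fl _ _) fl_nil.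
rewrite Pz /= => -[Ez Hr2].
have Hr1' : lab y \notin map lab r1 by rewrite notin_labs fl_nil.
have Hr2' : lab y \notin map lab r2 by rewrite notin_labs /fl Hr2.
have Ht : is_tail y = t by rewrite Ey.
have Ezl : lab z = lab y by apply/eqP.
have Hzt : is_tail z = ~~ t by rewrite Ez.
rewrite dz_cat /= count_cat /= HL // Ezl Ly Hzt Ht.
rewrite mem_cat in_cons eqxx /= orbT /=.
rewrite (@dz_eqi (lab y :: s) s); last first.
  by move=> b Hb; rewrite in_cons; case: (b =P lab y) => // E; rewrite -E Hb in Hr1'.
rewrite (@dz_eqi (lab y :: (rev (map lab r1) ++ lab y :: s)) (rev (map lab r1) ++ s)); last first.
  move=> b Hb; rewrite !in_cons !mem_cat; case: (b =P lab y) => [E|N]; first by rewrite -E Hb in Hr2'.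
  by rewrite in_cons (introF eqP N).
have := IH (r1 ++ r2) s _ HL _.
rewrite dz_cat count_cat.
set c1 := count _ (dz s r1); set c2 := count _ (dz _ r2).
rewrite eqb_id eqbF_neg negbK.
move=> H.
rewrite addnA addnCA addnA -addnA oddD -addnA oddD addbA addbb /=; apply: H.
  move: Hn; rewrite Er size_cat /= size_cat; lia.
move=> a La; have := Hp a La; rewrite /pairok /fl /= Er filter_cat /=.
case: (lab y =P a) => [<-|Na].
  have -> : filter (fun x => lab x == lab y) r1 = [::] by apply/eqP; rewrite -/(fl _ _) fl_nil.
  move=> _; left; rewrite filter_cat Hr2 cats0.
  by apply/eqP; rewrite -/(fl _ _) fl_nil.
by rewrite Ezl (introF eqP Na) filter_cat.
Qed.



Lemma B1v K W : (forall w, w \in W -> K w = false) -> B1 K W = false.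
Proof. move=> H; rewrite /B1 (eq_in_count (a2 := pred0)) ?count_pred0 //. Qed.

Lemma B2v H W : (forall b c, b \in W -> c \in W -> H b c = false) -> B2 H W = false.
Proof.
elim: W => [|y W IH] //= Hv; rewrite B1v ?IH //.
  by move=> b c Hb Hc; apply: Hv; rewrite in_cons ?Hb ?Hc orbT.
by move=> w Hw; apply: Hv; rewrite in_cons ?eqxx ?Hw ?orbT.
Qed.

Lemma B3v K W : (forall a b c, a \in W -> b \in W -> c \in W -> K a b c = false) -> B3 K W = false.
Proof.
elim: W => [|y W IH] //= Hv; rewrite B2v ?IH //.
  by move=> a b c Ha Hb Hc; apply: Hv; rewrite in_cons ?Ha ?Hb ?Hc orbT.
by move=> b c Hb Hc; apply: Hv; rewrite in_cons ?eqxx ?Hb ?Hc ?orbT.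
Qed.

Lemma R1 K u z v : K z = false -> B1 K (u ++ z :: v) = B1 K (u ++ v).
Proof. by move=> Hz; rewrite /B1 !count_cat /= Hz. Qed.

Lemma R2 (Dm : pred letter) H u z v : all Dm (u ++ v) ->
  (forall c, Dm c -> H z c = false) -> (forall b, Dm b -> H b z = false) ->
  B2 H (u ++ z :: v) = B2 H (u ++ v).
Proof.
move=> HD H1 H2; elim: u HD => [|y u IH] /= HD.
  by rewrite B1v // => w Hw; apply: H1; apply: (allP HD).
move/andP: HD => [Dy HD]; by rewrite IH // R1 // H2.
Qed.

Lemma R3 (Dm : pred letter) K u z v : all Dm (u ++ v) ->
  (forall b c, Dm b -> Dm c -> K z b c = false) ->
  (forall b c, Dm b -> Dm c -> K b z c = false) ->
  (forall b c, Dm b -> Dm c -> K b c z = false) ->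
  B3 K (u ++ z :: v) = B3 K (u ++ v).
Proof.
move=> HD H1 H2 H3; elim: u HD => [|y u IH] /= HD.
  by rewrite B2v // => b c Hb Hc; apply: H1; apply: (allP HD).
move/andP: HD => [Dy HD]; rewrite IH // (@R2 Dm _ _ _ _ HD) //.
  by move=> c Dc; apply: H2.
by move=> b Db; apply: H3.
Qed.

Lemma R4 (Dm : pred letter) F u z v : all Dm (u ++ v) ->
  (forall a b c, Dm a -> Dm b -> Dm c -> F z a b c = false) ->
  (forall a b c, Dm a -> Dm b -> Dm c -> F a z b c = false) ->
  (forall a b c, Dm a -> Dm b -> Dm c -> F a b z c = false) ->
  (forall a b c, Dm a -> Dm b -> Dm c -> F a b c z = false) ->
  B4 F (u ++ z :: v) = B4 F (u ++ v).
Proof.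
move=> HD H1 H2 H3 H4; elim: u HD => [|y u IH] /= HD.
  by rewrite B3v // => a b c Ha Hb Hc; apply: H1; apply: (allP HD).
move/andP: HD => [Dy HD]; rewrite IH // (@R3 Dm _ _ _ _ HD) //.
- by move=> b c Db Dc; apply: H2.
- by move=> b c Db Dc; apply: H3.
by move=> b c Db Dc; apply: H4.
Qed.

Lemma GL a b c d : G a b c d -> lab a = lab c /\ lab b = lab d.
Proof.
rewrite GE; case: (lab a =P lab c) => // ->; case: (lab b =P lab d) => //= ->.
Qed.

Lemma Fbits (M : pred nat) (g : letter -> bool -> bool) s u :
  (forall a, M a -> a \in map lab u -> a \notin s) ->
  (forall a, M a -> (count (fun y => lab y == a) u <= 1)%N) ->
  count (fun q => M (lab q.1) && g q.1 q.2) (dz s u) =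
  count (fun y => M (lab y) && g y (is_tail y)) u.
Proof.
elim: u s => [|y u IH] s //= H1 H2.
case My: (M (lab y)) => /=.
  rewrite H1 ?mem_head // eqb_id; congr (_ + _); apply: IH.
    move=> a Ma Hu; rewrite in_cons negb_or H1 ?in_cons ?Hu ?orbT // andbT.
    apply/eqP => E; subst a; have := H2 _ Ma; rewrite /= eqxx add1n ltnS leqn0 => /eqP C.
    have : lab y \notin map lab u by rewrite notin_labs fl_nil has_count C.
    by rewrite Hu.
  by move=> a Ma; have := H2 a Ma; case: (lab y == a) => //=; apply: leq_trans.
congr (_ + _); apply: IH.
  move=> a Ma Hu; rewrite in_cons negb_or H1 ?in_cons ?Hu ?orbT // andbT.
  by apply/eqP => E; rewrite E My in Ma.
by move=> a Ma; have := H2 a Ma; case: (lab y == a) => //=; apply: leq_trans.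
Qed.

Lemma notin_lab a W c : a \notin map lab W -> c \in W -> (lab c == a) = false.
Proof. by move=> H Hc; apply/eqP => E; move/negP: H; apply; rewrite -E map_f. Qed.

Lemma B2_only H w1 z w2 : (forall c d, c \in w1 -> H c d = false) ->
  (forall c d, c \in w2 -> d \in w2 -> H c d = false) ->
  B2 H (w1 ++ z :: w2) = B1 (H z) w2.
Proof.
move=> H1 H2; elim: w1 H1 => [|y w1 IH] /= H1.
  by rewrite B2v ?addbF.
rewrite B1v ?IH // => [c d Hc|w Hw]; apply: H1; by rewrite in_cons ?Hc ?eqxx ?orbT.
Qed.

Lemma Tcalc x x' t w1 w2 :
  is_tail x = t -> lab x' = lab x -> is_tail x' = ~~ t ->
  lab x \notin map lab w1 -> lab x \notin map lab w2 ->
  (forall y, y \in w1 -> fl (lab y) w2 = [::] \/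
        fl (lab y) w2 = [:: (lab y, ~~ is_tail y, sgnb y)]) ->
  B3 (G x) (w1 ++ x' :: w2) =
  odd (count (fun y => (lab y \in map lab w2) && (t (+) is_tail y)) w1).
Proof.
move=> Htx Hlx' Htx' Hx1 Hx2 Hp.
elim: w1 Hx1 Hp => [|y w1 IH] /= Hx1 Hp.
  rewrite B2v ?B3v //.
    move=> a b c _ Hb _; apply/negbTE/negP => /GL [E _].
    by move: (@notin_lab _ _ _ Hx2 Hb); rewrite E eqxx.
  move=> c d _ Hd; apply/negbTE/negP => /GL [_ E].
  by move: (@notin_lab _ _ _ Hx2 Hd); rewrite -E Hlx' eqxx.
move: Hx1; rewrite in_cons negb_or => /andP [Hxy Hx1].
rewrite IH //; last by move=> y' Hy'; apply: Hp; rewrite in_cons Hy' orbT.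
rewrite oddD; congr (_ (+) _).
rewrite B2_only.
- rewrite /B1.
  have -> : count (G x y x') w2 = count (G x y x') (fl (lab y) w2).
    rewrite /fl count_filter; apply: eq_count => d /=.
    case Hd: (G x y x' d) => //=; have [_ ->] := @GL _ _ _ _ Hd; by rewrite eqxx.
  have := Hp y (mem_head _ _); case => Ef; rewrite Ef.
    have : lab y \notin map lab w2 by rewrite notin_labs Ef.
    by move/negbTE => ->.
  have -> : lab y \in map lab w2 by rewrite -[_ \in _]negbK notin_labs Ef.
  rewrite /= GE /= Hlx' Htx Htx' !eqxx /= addn0.
  by rewrite /= !oddb; case: (t); case: (is_tail y).
- move=> c d Hc; apply/negbTE/negP => /GL [E _].
  by move: (@notin_lab _ _ _ Hx1 Hc); rewrite E eqxx.
move=> c d Hc _; apply/negbTE/negP => /GL [E _].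
by move: (@notin_lab _ _ _ Hx2 Hc); rewrite E eqxx.
Qed.

Lemma count_split (T : Type) (p q : pred T) s :
  count p s = count (fun x => q x && p x) s + count (fun x => ~~ q x && p x) s.
Proof. elim: s => [|y s IH] //=; rewrite IH; case: (p y); case: (q y) => //=; lia. Qed.

Lemma pairok_size a F : pairok a F -> size F = 0%N \/ size F = 2%N.
Proof. by case=> [->|[t [sg ->]]]; [left|right]. Qed.

Lemma Main W : wf2 W -> B4 G W = Phi W.
Proof.
have [n Hn] : exists n, (size W <= n)%N by exists (size W).
elim: n W Hn => [|n IH] [|x W'] //= Hn Hw.
have := Hw (lab x); rewrite /pairok /fl /= eqxx => -[//|[t [sg [Ex Hr]]]].
have Hh : has (fun y => lab y == lab x) W' by rewrite has_filter Hr.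
have [w1 [x' [w2 [Er Px' Hw1]]]] := @split_first _ _ _ Hh.
move: Hr; rewrite Er filter_cat /=.
have Hf1 : filter (fun y => lab y == lab x) w1 = [::] by apply/eqP; rewrite -/(fl _ _) fl_nil.
rewrite Hf1 Px' /= => -[Ex' Hf2].
have Hx1 : lab x \notin map lab w1 by rewrite notin_labs fl_nil.
have Hx2 : lab x \notin map lab w2 by rewrite notin_labs /fl Hf2.
have Hlx' : lab x' = lab x by apply/eqP.
have Htx : is_tail x = t by rewrite Ex.
have Htx' : is_tail x' = ~~ t by rewrite Ex'.
have Hfa : forall a, a != lab x -> fl a (x :: W') = fl a w1 ++ fl a w2.
  move=> a Na; have Na' : (lab x == a) = false by rewrite eq_sym; apply/negbTE.
  by rewrite /fl Er /= filter_cat /= Hlx' Na'.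
have HR : B4 G (w1 ++ x' :: w2) = B4 G (w1 ++ w2).
  apply: (@R4 (fun y => lab y != lab x) G w1 x' w2).
  - rewrite all_cat; apply/andP; split; apply/allP => y Hy.
      by rewrite (@notin_lab _ _ _ Hx1 Hy).
    by rewrite (@notin_lab _ _ _ Hx2 Hy).
  - move=> a b c Ha Hb Hc; apply/negbTE/negP => /GL [E1 E2].
    by rewrite -E1 Hlx' eqxx in Hb.
  - move=> a b c Ha Hb Hc; apply/negbTE/negP => /GL [E1 E2].
    by rewrite -E2 Hlx' eqxx in Hc.
  - move=> a b c Ha Hb Hc; apply/negbTE/negP => /GL [E1 E2].
    by rewrite E1 Hlx' eqxx in Ha.
  - move=> a b c Ha Hb Hc; apply/negbTE/negP => /GL [E1 E2].
    by rewrite E2 Hlx' eqxx in Hb.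
have Hw12 : wf2 (w1 ++ w2).
  move=> a; case: (a =P lab x) => [->|/eqP Na].
    by left; rewrite /fl filter_cat Hf1 Hf2.
  by have := Hw a; rewrite Hfa // /fl filter_cat.
have HIH := IH (w1 ++ w2) _ Hw12.
rewrite HR HIH; last by move: Hn; rewrite Er !size_cat /=; lia.
have Hpart : forall y, y \in w1 -> fl (lab y) w2 = [::] \/
        fl (lab y) w2 = [:: (lab y, ~~ is_tail y, sgnb y)].
  move=> y Hy.
  have Na : lab y != lab x by apply/negbT; apply: (@notin_lab _ _ _ Hx1 Hy).
  have Hy1 : y \in fl (lab y) w1 by rewrite mem_filter eqxx Hy.
  have := Hw (lab y); rewrite Hfa //.
  case: (fl (lab y) w1) Hy1 => [|p1 [|p2 [|p3 l]]] //=.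
  - rewrite mem_seq1 => /eqP Ey.
    case => [//|[t' [s' [Ep1 Ew2]]]]; right; rewrite Ew2 Ey Ep1 /=.
    by [].
  - by move=> _; case => [//|[t' [s' [_ _ ->]]]]; left.
  - by move=> _; case => [//|[t' [s' //]]].
rewrite (@Tcalc x x' t w1 w2 Htx Hlx' Htx' Hx1 Hx2 Hpart).
rewrite /Phi /bits /= !dz_cat /= Htx eqb_id Htx' Hlx'.
rewrite mem_cat mem_rev in_cons eqxx orbT /= eqbF_neg negbK.
rewrite (@dz_eqi [:: lab x] [::] w1); last first.
  by move=> b Hb; rewrite in_cons in_nil orbF; apply/negbTE/eqP => E; rewrite -E Hb in Hx1.
rewrite (@dz_eqi (lab x :: rev (map lab w1) ++ [:: lab x]) (rev (map lab w1) ++ [::]) w2); last first.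
  move=> b Hb; rewrite in_cons !mem_cat !in_cons in_nil orbF.
  by case: (b =P lab x) => [E|//]; rewrite -E Hb in Hx2.
rewrite !map_cat /=.
set B1 := [seq i.2 | i <- dz [::] w1].
set B2 := [seq i.2 | i <- dz _ w2].
rewrite -[X in _ = X]/(cb (t :: (B1 ++ t :: B2))).
rewrite cb_ins addbC; congr (_ (+) _).
have -> : count (fun b => b (+) t) B1 =
   (count (fun q => (lab q.1 \in map lab w2) && (q.2 (+) t)) (dz [::] w1) +
    count (fun q => (lab q.1 \notin map lab w2) && (q.2 (+) t)) (dz [::] w1))%N.
  by rewrite /B1 count_map (count_split _ _ (fun q => lab q.1 \in map lab w2)).
have HE := E (fun a => a \notin map lab w2) (fun b => b (+) t) [::] w1.
rewrite oddD (negbTE (HE _ _)) ?addbF; last first.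
  move=> a La; case: (a =P lab x) => [->|/eqP Na]; first by left; rewrite /fl Hf1.
  have := Hw a; rewrite Hfa //.
  have -> : fl a w2 = [::] by apply/eqP; rewrite -notin_labs.
  by rewrite cats0.
  by [].
rewrite (@Fbits (fun a => a \in map lab w2) (fun _ b => b (+) t) [::] w1).
- by congr odd; apply: eq_count => y; rewrite addbC.
- by [].
move=> a Ma; case: (a =P lab x) => [E|/eqP Na]; first by rewrite -E Ma in Hx2.
have := @pairok_size _ _ (Hw a); rewrite Hfa // size_cat.
have : fl a w2 != [::] by rewrite -notin_labs negbK.
rewrite -size_filter -/(fl a w1); case: (fl a w2) => [|q l] //= _ [] H; lia.
Qed.

Lemma lab_flip y : lab (flip y) = lab y. Proof. by []. Qed.
Lemma tail_flip y : is_tail (flip y) = ~~ is_tail y. Proof. by []. Qed.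

Lemma odd2 (a b : bool) : odd (count id [:: a; b]) = a (+) b.
Proof. by case: a; case: b. Qed.

Lemma blk_step s u p q v X' : lab p != lab q ->
  (X' = [:: q; p] \/ X' = [:: flip p; flip q]) ->
  cb (bits s (u ++ X' ++ v)) =
  cb (bits s (u ++ [:: p; q] ++ v)) (+) odd (count id (bits (rev (map lab u) ++ s) [:: p; q])).
Proof.
move=> Npq HX.
rewrite /bits !dz_cat !map_cat.
set c := rev (map lab u) ++ s.
have Hc : dz (rev (map lab X') ++ c) v = dz (rev (map lab [:: p; q]) ++ c) v.
  apply: dz_eqi => b _; case: HX => -> /=; rewrite !in_cons;
  by case: (b == lab p); case: (b == lab q).
rewrite Hc.
have Nqp : (lab q == lab p) = false by apply/negbTE; rewrite eq_sym.
have Epq : map snd (dz c [:: p; q]) = [:: is_tail p == (lab p \notin c); is_tail q == (lab q \notin c)].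
  by rewrite /= in_cons Nqp.
rewrite Epq odd2.
case: HX => ->.
  have -> : map snd (dz c [:: q; p]) = [:: is_tail q == (lab q \notin c); is_tail p == (lab p \notin c)].
    by rewrite /= in_cons (negbTE Npq).
  by rewrite cb_rev2.
have -> : map snd (dz c [:: flip p; flip q]) = [:: ~~ (is_tail p == (lab p \notin c)); ~~ (is_tail q == (lab q \notin c))].
  rewrite /= !lab_flip !tail_flip in_cons Nqp /=; by case: (is_tail p); case: (is_tail q); case: (lab p \in c); case: (lab q \in c).
by rewrite cb_neg2.
Qed.

Definition bw (u0 : gword) (bs : seq (gword * gword)) :=
  u0 ++ flatten (map (fun pr => pr.1 ++ pr.2) bs).

Lemma cnt0 (L : pred nat) c u : all (fun y => ~~ L (lab y)) u ->
  count (fun q => L (lab q.1) && q.2) (dz c u) = 0%N.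
Proof. elim: u c => [|y u IH] c //= /andP [Hy Hu]; by rewrite (negbTE Hy) IH. Qed.

Lemma cntL (L : pred nat) c u : all (fun y => L (lab y)) u ->
  count (fun q => L (lab q.1) && q.2) (dz c u) = count id (map snd (dz c u)).
Proof. elim: u c => [|y u IH] c //= /andP [Hy Hu]; by rewrite Hy IH. Qed.

Lemma GB (g : gword -> gword) (L : pred nat) s bs : forall P u0,
  (forall X u, (X, u) \in bs -> [/\ (exists p q, [/\ X = [:: p; q], lab p != lab q &
        (g X = [:: q; p] \/ g X = [:: flip p; flip q])]),
     all (fun y => L (lab y)) X & all (fun y => ~~ L (lab y)) u]) ->
  all (fun y => ~~ L (lab y)) u0 ->
  cb (bits s (P ++ bw u0 (map (fun pr => (g pr.1, pr.2)) bs))) =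
  cb (bits s (P ++ bw u0 bs)) (+)
    odd (count (fun q => L (lab q.1) && q.2) (dz (rev (map lab P) ++ s) (bw u0 bs))).
Proof.
elim: bs => [|[X u] bs IH] P u0 Hb Hu0.
  by rewrite /bw /= cats0 cnt0 // addbF.
have [[p [q [EX Npq HgX]]] HXL HuL] := Hb X u (mem_head _ _).
have E1 : P ++ bw u0 (map (fun pr => (g pr.1, pr.2)) ((X, u) :: bs)) =
   (P ++ u0) ++ g X ++ bw u (map (fun pr => (g pr.1, pr.2)) bs).
  by rewrite /bw /= -?catA.
rewrite E1 EX (@blk_step s (P ++ u0) p q _ (g [:: p; q])) //; last by rewrite -EX.
have E2 : (P ++ u0) ++ [:: p; q] ++ bw u (map (fun pr => (g pr.1, pr.2)) bs) =
   (P ++ u0 ++ [:: p; q]) ++ bw u (map (fun pr => (g pr.1, pr.2)) bs).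
  by rewrite -?catA.
rewrite E2 IH //; last by move=> X' u' H; apply: Hb; rewrite in_cons H orbT.
have E3 : P ++ bw u0 (([:: p; q], u) :: bs) = (P ++ u0 ++ [:: p; q]) ++ bw u bs.
  by rewrite /bw /= -?catA.
rewrite E3 -addbA; congr (_ (+) _).
have E4 : bw u0 (([:: p; q], u) :: bs) = u0 ++ [:: p; q] ++ bw u bs by rewrite /bw /= -?catA.
rewrite E4 (dz_cat _ u0) count_cat (@cnt0 L _ u0 Hu0) add0n (dz_cat _ [:: p; q]) count_cat.
rewrite (@cntL L _ [:: p; q]); last by rewrite -EX.
rewrite oddD addbC /bits.
by rewrite !map_cat !rev_cat -?catA.
Qed.

Lemma count_bw (p : pred letter) u0 bs :
  count p (bw u0 bs) = (count p (flatten (map fst bs)) + count p (u0 ++ flatten (map snd bs)))%N.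
Proof.
rewrite /bw !count_cat.
suff -> : count p (flatten [seq pr.1 ++ pr.2 | pr <- bs]) =
  (count p (flatten (map fst bs)) + count p (flatten (map snd bs)))%N by lia.
elim: bs => [|[X u] bs IH] //=; rewrite !count_cat IH; lia.
Qed.

Lemma blocks_inv (g : gword -> gword) (L : pred nat) u0 bs :
  wf2 (bw u0 bs) ->
  (forall X u, (X, u) \in bs -> (exists p q, [/\ X = [:: p; q], lab p != lab q &
        (g X = [:: q; p] \/ g X = [:: flip p; flip q])]) /\ all (fun y => L (lab y)) X) ->
  (forall a, L a -> count (fun y => lab y == a) (flatten (map fst bs)) = 2%N) ->
  Phi (bw u0 (map (fun pr => (g pr.1, pr.2)) bs)) = Phi (bw u0 bs).
Proof.
move=> Hw Hb Hc.
have H0 : forall a, L a -> count (fun y => lab y == a) (u0 ++ flatten (map snd bs)) = 0%N.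
  move=> a La; have := @pairok_size _ _ (Hw a); rewrite /fl size_filter count_bw Hc //; lia.
have Hnl : forall y, y \in u0 ++ flatten (map snd bs) -> ~~ L (lab y).
  move=> y Hy; apply/negP => Ly; have := H0 _ Ly.
  by move/eqP; rewrite -leqn0 leqNgt -has_count; move/negP; apply; apply/hasP; exists y.
have := @GB g L [::] bs [::] u0.
rewrite /Phi /= => ->.
- suff -> : odd (count (fun q => L (lab q.1) && q.2) (dz [::] (bw u0 bs))) = false by rewrite addbF.
  apply/negbTE; apply: (@E L (fun b => b) [::] (bw u0 bs)).
    by move=> a _; rewrite in_nil.
  by move=> a _; apply: Hw.
- move=> X u Hxu; have [H1 H2] := Hb X u Hxu; split => //.
  apply/allP => y Hy; apply: Hnl; rewrite mem_cat; apply/orP; right.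
  apply/flattenP; exists u => //; apply/mapP; by exists (X, u).
apply/allP => y Hy; apply: Hnl; by rewrite mem_cat Hy.
Qed.

Lemma pair2_cnt (P : pred letter) o A B : count P (pair2 o A B) = count P [:: A; B].
Proof. by case: o => //=; rewrite addnCA. Qed.

Lemma pair2_mem o A B X : X = pair2 o A B -> lab A != lab B ->
  exists p q, [/\ X = [:: p; q], lab p != lab q &
     (rev X = [:: q; p] \/ rev X = [:: flip p; flip q])].
Proof.
move=> -> N; case: o.
  by exists A, B; split => //; left.
by exists B, A; split => //; [rewrite eq_sym | left].
Qed.

Lemma pair2_memf o A B X : X = pair2 o A B -> lab A != lab B ->
  exists p q, [/\ X = [:: p; q], lab p != lab q &
     (map flip X = [:: q; p] \/ map flip X = [:: flip p; flip q])].
Proof.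
move=> -> N; case: o.
  by exists A, B; split => //; right.
by exists B, A; split => //; [rewrite eq_sym | right].
Qed.

Lemma R3_inv W1 W2 : wf2 W1 -> R3_move W1 W2 -> Phi W1 = Phi W2.
Proof.
move=> Hw [x [y [z [sx [sy [sz [oT [oM [oB [X1 [X2 [X3 [u0 [u1 [u2 [u3
  [Hu [_ [_ [Hp [E1 E2]]]]]]]]]]]]]]]]]]]]].
move: Hu; rewrite /= !in_cons in_nil !orbF !negb_or andbT; move=> /andP [/andP [Nxy Nxz] Nyz].
set bs := [:: (X1, u1); (X2, u2); (X3, u3)].
have EW1 : W1 = bw u0 bs by rewrite E1 /bw /= cats0 -?catA.
have EW2 : W2 = bw u0 (map (fun pr => (rev pr.1, pr.2)) bs) by rewrite E2 /bw /= cats0 -?catA.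
rewrite EW2 EW1; symmetry; apply: (@blocks_inv (@rev letter) (fun a => a \in [:: x; y; z]) u0 bs).
- by rewrite -EW1.
- move=> X u Hxu.
  have HX : X \in [:: X1; X2; X3].
    by have : X \in map fst bs by apply/mapP; exists (X, u).
  rewrite (perm_mem Hp) !in_cons in_nil orbF in HX.
  case/or3P: HX => /eqP ->; split.
  + by apply: (@pair2_mem oT (x, true, sx) (y, true, sy)).
  + by case: (oT); rewrite /= !in_cons !eqxx ?orbT.
  + by apply: (@pair2_mem oM (x, false, sx) (z, true, sz)).
  + by case: (oM); rewrite /= !in_cons !eqxx ?orbT.
  + by apply: (@pair2_mem oB (y, false, sy) (z, false, sz)).
  + by case: (oB); rewrite /= !in_cons !eqxx ?orbT.
move=> a Ha.
rewrite count_flatten (perm_sumn (perm_map _ Hp)) /= !pair2_cnt /=.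
rewrite !in_cons in_nil orbF in Ha.
have e1 : (x == y) = false by apply/negbTE.
have e2 : (y == x) = false by rewrite eq_sym; apply/negbTE.
have e3 : (x == z) = false by apply/negbTE.
have e4 : (z == x) = false by rewrite eq_sym; apply/negbTE.
have e5 : (y == z) = false by apply/negbTE.
have e6 : (z == y) = false by rewrite eq_sym; apply/negbTE.
by case/or3P: Ha => /eqP ->; rewrite /lab /= ?eqxx ?e1 ?e2 ?e3 ?e4 ?e5 ?e6.
Qed.

Lemma BP_inv W1 W2 : wf2 W1 -> bandpass_move W1 W2 -> Phi W1 = Phi W2.
Proof.
move=> Hw [x11 [x12 [x21 [x22 [s [p [q [X1 [X2 [X3 [X4 [u0 [u1 [u2 [u3 [u4
  [Hu [Hp [E1 E2]]]]]]]]]]]]]]]]]]].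
have e1 : (x11 == x12) = false by apply/eqP => E; move: Hu; rewrite E /= !in_cons !eqxx ?orbT.
have e2 : (x11 == x21) = false by apply/eqP => E; move: Hu; rewrite E /= !in_cons !eqxx ?orbT.
have e3 : (x11 == x22) = false by apply/eqP => E; move: Hu; rewrite E /= !in_cons !eqxx ?orbT.
have e4 : (x12 == x21) = false by apply/eqP => E; move: Hu; rewrite E /= !in_cons !eqxx ?orbT ?andbF.
have e5 : (x12 == x22) = false by apply/eqP => E; move: Hu; rewrite E /= !in_cons !eqxx ?orbT ?andbF.
have e6 : (x21 == x22) = false by apply/eqP => E; move: Hu; rewrite E /= !in_cons !eqxx ?orbT ?andbF.
have f1 : (x12 == x11) = false by rewrite eq_sym.
have f2 : (x21 == x11) = false by rewrite eq_sym.
have f3 : (x22 == x11) = false by rewrite eq_sym.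
have f4 : (x21 == x12) = false by rewrite eq_sym.
have f5 : (x22 == x12) = false by rewrite eq_sym.
have f6 : (x22 == x21) = false by rewrite eq_sym.
set bs := [:: (X1, u1); (X2, u2); (X3, u3); (X4, u4)].
have EW1 : W1 = bw u0 bs by rewrite E1 /bw /= cats0 -?catA.
have EW2 : W2 = bw u0 (map (fun pr => (map flip pr.1, pr.2)) bs) by rewrite E2 /bw /= cats0 -?catA.
rewrite EW2 EW1; symmetry.
apply: (@blocks_inv (map flip) (fun a => a \in [:: x11; x12; x21; x22]) u0 bs).
- by rewrite -EW1.
- move=> X u Hxu.
  have HX : X \in [:: X1; X2; X3; X4].
    by have : X \in map fst bs by apply/mapP; exists (X, u).
  rewrite (perm_mem Hp) !in_cons in_nil orbF in HX.
  case/or4P: HX => /eqP ->; split.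
  + exact: (@pair2_memf p (x11, true, s) (x12, true, ~~ s) _ erefl (negbT e1)).
  + by case: (p); rewrite /= !in_cons !eqxx ?orbT.
  + exact: (@pair2_memf (~~ p) (x21, true, ~~ s) (x22, true, s) _ erefl (negbT e6)).
  + by case: (p); rewrite /= !in_cons !eqxx ?orbT.
  + exact: (@pair2_memf q (x11, false, s) (x21, false, ~~ s) _ erefl (negbT e2)).
  + by case: (q); rewrite /= !in_cons !eqxx ?orbT.
  + exact: (@pair2_memf (~~ q) (x12, false, ~~ s) (x22, false, s) _ erefl (negbT e5)).
  + by case: (q); rewrite /= !in_cons !eqxx ?orbT.
move=> a Ha.
rewrite count_flatten (perm_sumn (perm_map _ Hp)) /= !pair2_cnt /=.
rewrite !in_cons in_nil orbF in Ha.
by case/or4P: Ha => /eqP ->; rewrite /lab /= ?eqxx ?e1 ?e2 ?e3 ?e4 ?e5 ?e6 ?f1 ?f2 ?f3 ?f4 ?f5 ?f6.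
Qed.

Lemma lab_pair n t s : lab (n, t, s) = n. Proof. by []. Qed.

Lemma cnt_notin a u : count (fun y => lab y == a) u = 0%N -> a \notin map lab u.
Proof. by move=> H; rewrite notin_labs fl_nil has_count H. Qed.

Lemma wf_cnt a W : wf2 W -> (count (fun y => lab y == a) W <= 2)%N.
Proof. move=> Hw; have := @pairok_size _ _ (Hw a); rewrite /fl size_filter; lia. Qed.

Lemma Rel_inv W1 W2 : relabel_move W1 W2 -> Phi W1 = Phi W2.
Proof.
move=> [f [Hf ->]]; rewrite /Phi /bits.
suff H : forall s u, map snd (dz (map f s) (map (fun l => (f (lab l), is_tail l, sgnb l)) u)) =
   map snd (dz s u) by rewrite (H [::]).
move=> s u; elim: u s => [|y u IH] s //=.
by rewrite (mem_map Hf) -(IH (lab y :: s)).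
Qed.

Lemma R1_inv W1 W2 : wf2 W1 -> R1_move W1 W2 -> Phi W1 = Phi W2.
Proof.
move=> Hw [u [v [a [t [s [E1 ->]]]]]].
have Hc := @wf_cnt a W1 Hw; rewrite E1 !count_cat /= eqxx /= in Hc.
have Hu : a \notin map lab u by apply: cnt_notin; lia.
have Hv : a \notin map lab v by apply: cnt_notin; lia.
rewrite E1 /Phi /bits !dz_cat !map_cat /=.
rewrite mem_cat mem_rev (negbTE Hu) in_cons eqxx /= eqb_id eqbF_neg negbK.
rewrite (@dz_eqi (a :: a :: rev (map lab u) ++ [::]) (rev (map lab u) ++ [::]) v); last first.
  move=> b Hb; rewrite !in_cons; case: (b =P a) => // E; by rewrite -E Hb in Hv.
by rewrite cb_dd.
Qed.

Lemma bits_pair2_eq c o X Y d : lab X != lab Y ->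
  (is_tail X == (lab X \notin c)) = d -> (is_tail Y == (lab Y \notin c)) = d ->
  bits c (pair2 o X Y) = [:: d; d].
Proof.
move=> N HX HY; have N' : (lab Y == lab X) = false by rewrite eq_sym; apply/negbTE.
by case: o; rewrite /bits /= in_cons ?N' ?(negbTE N) /= ?HX ?HY.
Qed.

Lemma R2_inv W1 W2 : wf2 W1 -> R2_move W1 W2 -> Phi W1 = Phi W2.
Proof.
move=> Hw [u [v [w [a [b [tau [s [p [q [Nab [E1 ->]]]]]]]]]]].
have Hca := @wf_cnt a W1 Hw; have Hcb := @wf_cnt b W1 Hw.
have Nba : (b == a) = false by rewrite eq_sym; apply/negbTE.
rewrite E1 !count_cat !pair2_cnt /= !lab_pair ?eqxx ?(negbTE Nab) ?Nba /= in Hca.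
rewrite E1 !count_cat !pair2_cnt /= !lab_pair ?eqxx ?(negbTE Nab) ?Nba /= in Hcb.
have Hua : a \notin map lab u by apply: cnt_notin; lia.
have Hva : a \notin map lab v by apply: cnt_notin; lia.
have Hwa : a \notin map lab w by apply: cnt_notin; lia.
have Hub : b \notin map lab u by apply: cnt_notin; lia.
have Hvb : b \notin map lab v by apply: cnt_notin; lia.
have Hwb : b \notin map lab w by apply: cnt_notin; lia.
set X := pair2 p (a, tau, s) (b, tau, ~~ s).
set Y := pair2 q (a, ~~ tau, s) (b, ~~ tau, ~~ s).
have mX : forall c, (c \in map lab X) = (c == a) || (c == b).
  by move=> c; rewrite /X; case: (p); rewrite /= !in_cons in_nil orbF // orbC.
have mY : forall c, (c \in map lab Y) = (c == a) || (c == b).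
  by move=> c; rewrite /Y; case: (q); rewrite /= !in_cons in_nil orbF // orbC.
rewrite E1 /Phi /bits !dz_cat !map_cat -!/(bits _ _) /= !cats0.
have BX : bits (rev (map lab u)) X = [:: tau; tau].
  apply: bits_pair2_eq => //=; by rewrite mem_rev ?(negbTE Hua) ?(negbTE Hub) eqb_id.
have BY : bits (rev (map lab v) ++ rev (map lab X) ++ rev (map lab u)) Y = [:: tau; tau].
  apply: bits_pair2_eq => //=; rewrite !mem_cat !mem_rev mX ?eqxx ?orbT ?Nba ?(negbTE Nab) /=.
    by case: (tau).
  by case: (tau).
rewrite BX BY.
rewrite /bits (@dz_eqi (rev (map lab X) ++ rev (map lab u)) (rev (map lab u)) v); last first.
  move=> c0 Hc0; rewrite mem_cat mem_rev mX; case: (c0 =P a) => [E|_]; first by rewrite -E Hc0 in Hva.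
  by case: (c0 =P b) => [E|_] //; rewrite -E Hc0 in Hvb.
rewrite (@dz_eqi (rev (map lab Y) ++ rev (map lab v) ++ rev (map lab X) ++ rev (map lab u))
   (rev (map lab v) ++ rev (map lab u)) w); last first.
  move=> c0 Hc0; rewrite !mem_cat !mem_rev mX mY; case: (c0 =P a) => [E|_]; first by rewrite -E Hc0 in Hwa.
  by case: (c0 =P b) => [E|_] //; rewrite -E Hc0 in Hwb.
rewrite -/(bits _ _) -/(bits _ _) -/(bits _ _).
by rewrite /= cb_dd catA cb_dd -catA.
Qed.

Lemma elem_inv Wa Wb : wf2 Wa -> elem_move Wa Wb -> Phi Wa = Phi Wb.
Proof.
move=> Hw [H|[H|[H|[H|H]]]].
- exact: Rel_inv.
- exact: R1_inv.
- exact: R2_inv.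
- exact: R3_inv.
exact: BP_inv.
Qed.

Lemma step_inv W1 W2 : move_step W1 W2 -> Phi W1 = Phi W2.
Proof.
move=> [H1 H2 [H|H]]; first exact: (@elem_inv W1 W2 (@wf_wf2 _ H1) H).
by symmetry; apply: (@elem_inv W2 W1 (@wf_wf2 _ H2) H).
Qed.

Lemma bp_inv K1 K2 : bp_equiv K1 K2 -> Phi K1 = Phi K2.
Proof. by elim=> // W1 W2 W3 Hs _ IH; rewrite (@step_inv W1 W2 Hs). Qed.

Local Open Scope ring_scope.

Theorem theorem3 (K1 K2 : gword) :
  gauss_wf K1 -> gauss_wf K2 -> bp_equiv K1 K2 ->
  (v21 K1 + v22 K1 = v21 K2 + v22 K2 %[mod 2])%Z.
Proof.
move=> H1 H2 Hb.
have HP : P (v21 K1 + v22 K1) = P (v21 K2 + v22 K2).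
  by rewrite !Pv (@Main _ (@wf_wf2 _ H1)) (@Main _ (@wf_wf2 _ H2)) (@bp_inv K1 K2 Hb).
move: HP; rewrite /P.
move: (v21 K1 + v22 K1) (v21 K2 + v22 K2) => a b.
case: (boolP (2 %| a)%Z); case: (boolP (2 %| b)%Z) => //= Hb' Ha' _; lia.
Qed.
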